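(* Let $\sigma\in S_V$ be a valid composite state of $\mathcal{M}uddy\mathcal{P}uzzle$ with $\sigma\notin S_0$, and let $N=|M|$ where $M=\bigcup_{k}\mathit{Obs}(\sigma_k)$. Then for every component $i$ of $\sigma$ which is a running state $\sigma_i=\langle\mathit{Obs}_i,r_i,s_i\rangle$: (1) if $s_i=u$, then $r_i<|\mathit{Obs}_i|$ (and $|\mathit{Obs}_i|\le N$); (2) if $s_i=m$, then $r_i=N-1=|\mathit{Obs}_i|$; (3) if $s_i=c$, then $r_i=N=|\mathit{Obs}_i|$.
   Context: Fix $n \ge 1$ children indexed $1,\dots,n$. A message is a triple $\langle j, r, s\rangle$ with $j \in \{1,\dots,n\}$ (the sender), $r \in \mathbb{N}$ (a round number) and $s \in \{u,m,c\}$ (epistemic status: $u$ = ''does not know own status'', $m$ = ''knows they are muddy'', $c$ = ''knows they are clean''); $\bot$ denotes ''no message''. Child $i$ is a VLSM $\mathcal{C}_i$ with labels $\{\mathit{init},\mathit{emit},\mathit{receive}\}$, no initial messages, initial states $\langle \mathit{Obs}\rangle$ with $\mathit{Obs}\subseteq\{1,\dots,n\}$, and running states $\langle \mathit{Obs}, r, s\rangle$ with $\mathit{Obs}\subseteq\{1,\dots,n\}$, $r\in\mathbb{N}$, $s\in\{u,m,c\}$; $\mathit{Obs}(\cdot)$ denotes the observation set of either kind of state. Transitions $\tau_i$ and local validity $\beta_i$: - init: enabled only on an initial state $\langle\mathit{Obs}\rangle$ with input $\bot$; goes to $\langle \mathit{Obs},0,u\rangle$ if $\mathit{Obs}\ne\emptyset$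 and to $\langle\mathit{Obs},0,m\rangle$ if $\mathit{Obs}=\emptyset$; output $\bot$. - emit: enabled only on a running state $\langle\mathit{Obs},r,s\rangle$ with input $\bot$; state unchanged, output $\langle i,r,s\rangle$. - receive: on a running state $\langle\mathit{Obs},r,s\rangle$ with input message $\langle j,r',s'\rangle$, output $\bot$, new state given by the first applicable case: (R1) $s\in\{m,c\}$: unchanged. Otherwise $s=u$ and: (R2) $s'=c$, $j\notin\mathit{Obs}$, $r'=|\mathit{Obs}|$: $\langle\mathit{Obs},r',c\rangle$; (R3) $s'=c$, $j\notin\mathit{Obs}$, $r'=|\mathit{Obs}|+1$: $\langle\mathit{Obs},r'-1,m\rangle$; (R4) $s'=m$, $j\in\mathit{Obs}$, $r'=|\mathit{Obs}|$: $\langle\mathit{Obs},r',m\rangle$; (R5) $s'=m$, $j\in\mathit{Obs}$, $r'=|\mathit{Obs}|-1$: $\langle\mathit{Obs},r'+1,c\rangle$; (R6) $s'=u$, $j\in\mathit{Obs}$, $r'<r$: unchanged; (R7) $s'=u$, $j\in\mathit{Obs}$, $r\le r'<|\mathit{Obs}|-1$: $\langle\mathit{Obs},r'+1,u\rangle$; (R8) $s'=u$, $j\in\mathit{Obs}$, $r'=|\mathit{Obs}|-1$: $\langle\mathit{Obs},r'+1,m\rangle$; (R9) $s'=u$, $j\notin\mathit{Obs}$, $r'\le r$: unchanged; (R10) $s'=u$, $j\notin\mathit{Obs}$, $r<r'<|\mathit{Obs}|$: $\langle\mathit{Obs},r',u\rangle$; (R11) $s'=u$, $j\notin\mathit{Obs}$,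 $r'=|\mathit{Obs}|$: $\langle\mathit{Obs},r',m\rangle$. $\beta_i$ for receive holds exactly when one of (R1)–(R11) applies. Composition $\mathcal{M}uddy\mathcal{P}uzzle=(\mathcal{C}_1+\dots+\mathcal{C}_n)|_\varphi$: composite states are tuples $\sigma=(\sigma_1,\dots,\sigma_n)$; composite initial states ($S_0$) are those with every component initial; labels are pairs $(i,l)$; transition $(i,l)$ with input $\mu$ applies $\tau_i(l,\sigma_i,\mu)$ to component $i$, leaves the others unchanged, and is allowed iff $\beta_i(l,\sigma_i,\mu)\wedge\varphi((i,l),\sigma,\mu)$. For a composite state $\sigma$ let $M=\bigcup_{i}\mathit{Obs}(\sigma_i)$; $\mathbf{consistent}(\sigma)$ means $M\ne\emptyset$ and $\mathit{Obs}(\sigma_i)=M\setminus\{i\}$ for all $i$. The composition constraint: $\varphi((i,\mathit{init}),\sigma,\mu)=\mathbf{consistent}(\sigma)$; $\varphi((i,\mathit{emit}),\sigma,\mu)=\text{true}$; $\varphi((i,\mathit{receive}),\sigma,\langle j,r',s'\rangle)$ holds iff $\sigma_j$ is a running state $\langle \mathit{Obs}_j,r_j,s_j\rangle$ and $(s'=s_j\wedge r'=r_j)\vee(s'=u\wedge r'<r_j)$. Validity (VLSM sense): a transition is constrained if its input satisfies the constraint. Valid traces and valid messages are defined by simultaneous induction: a valid trace is a finite sequence of constrained transitions starting in a composite initial state in which every input message is either $\bot$ or a valid message; a valid message is one output by some transition of some valid trace. A valid state is one reachable by a valid trace; $S_V$ is the set of valid states and $S_V^\ast=S_V\setminus S_0$.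 *)

(* Defs.v *)
(* Children are indexed by 'I_n (0-based) instead of 1..n. *)
From mathcomp Require Import all_boot.
Set Implicit Arguments. Unset Strict Implicit. Unset Printing Implicit Defensive.

Inductive status := U | Mu | Cl.

Section Muddy.
Variable n : nat.

(* message <j, r, s>; "no message" (bottom) is None *)
Record msg := Msg { sender : 'I_n ; mround : nat ; mstatus : status }.

Inductive cstate :=
| Init of {set 'I_n}
| Run of {set 'I_n} & nat & status.

Definition obs (st : cstate) : {set 'I_n} :=
  match st with Init Ob => Ob | Run Ob _ _ => Ob end.

Inductive label := linit | lemit | lreceive.

(* receive transition on a running state, first applicable case of R1-R11;
   None when no case applies (i.e. beta_i fails) *)
Definition receive (Ob : {set 'I_n}) (r : nat) (s : status) (mu : msg)
  : option cstate :=
  let: Msg j r' s' := mu in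
  match s with
  | Mu | Cl => Some (Run Ob r s)                                   (* R1 *)
  | U =>
    match s' with
    | Cl => if j \notin Ob then
              if r' == #|Ob| then Some (Run Ob r' Cl)                (* R2 *)
              else if r' == #|Ob|.+1 then Some (Run Ob (r' - 1) Mu) (* R3 *)
              else None
            else None
    | Mu => if j \in Ob then
              if r' == #|Ob| then Some (Run Ob r' Mu)                (* R4 *)
              else if r'.+1 == #|Ob| then Some (Run Ob r'.+1 Cl)     (* R5 : r' = |Ob|-1 *)
              else None
            else None
    | U => if j \in Ob then
             if r' < r then Some (Run Ob r U)                       (* R6 *)
             else if r'.+2 <= #|Ob| then Some (Run Ob r'.+1 U)      (* R7 : r <= r' < |Ob|-1 *)
             else if r'.+1 == #|Ob| then Some (Run Ob r'.+1 Mu)     (* R8 : r' = |Ob|-1 *)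
             else None
           else
             if r' <= r then Some (Run Ob r U)                      (* R9 *)
             else if r' < #|Ob| then Some (Run Ob r' U)             (* R10 *)
             else if r' == #|Ob| then Some (Run Ob r' Mu)           (* R11 *)
             else None
    end
  end.

(* local transition tau_i restricted to where beta_i holds (and the
   transition is enabled); returns (new state, output) *)
Definition ltrans (i : 'I_n) (l : label) (st : cstate) (mu : option msg)
  : option (cstate * option msg) :=
  match l, st, mu with
  | linit, Init Ob, None =>
      Some (Run Ob 0 (if Ob == set0 then Mu else U), None)
  | lemit, Run Ob r s, None => Some (Run Ob r s, Some (Msg i r s))
  | lreceive, Run Ob r s, Some m =>
      match receive Ob r s m with Some st' => Some (st', None) | None => None end
  | _, _, _ => None
  end.

Definition cstate_c := 'I_n -> cstate.

Definition composite_initial (sg : cstate_c) : Prop :=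
  forall i, exists Ob, sg i = Init Ob.

Definition bigM (sg : cstate_c) : {set 'I_n} := \bigcup_(k : 'I_n) obs (sg k).

Definition consistent (sg : cstate_c) : Prop :=
  bigM sg != set0 /\ forall i, obs (sg i) = bigM sg :\ i.

Definition phi (i : 'I_n) (l : label) (sg : cstate_c) (mu : option msg) : Prop :=
  match l with
  | linit => consistent sg
  | lemit => True
  | lreceive =>
      match mu with
      | Some (Msg j r' s') =>
          exists Oj rj sj, sg j = Run Oj rj sj /\
            ((s' = sj /\ r' = rj) \/ (s' = U /\ r' < rj))
      | None => False
      end
  end.

Definition update (sg : cstate_c) (i : 'I_n) (st : cstate) : cstate_c :=
  fun k => if k == i then st else sg k.

Inductive valid_state : cstate_c -> Prop :=
| vs_init : forall sg, composite_initial sg -> valid_state sg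
| vs_step : forall sg i l mu st' out,
    valid_state sg ->
    (mu = None \/ exists m, mu = Some m /\ valid_msg m) ->
    phi i l sg mu ->
    ltrans i l (sg i) mu = Some (st', out) ->
    valid_state (update sg i st')
with valid_msg : msg -> Prop :=
| vm_out : forall sg i l mu st' m,
    valid_state sg ->
    (mu = None \/ exists m0, mu = Some m0 /\ valid_msg m0) ->
    phi i l sg mu ->
    ltrans i l (sg i) mu = Some (st', Some m) ->
    valid_msg m.

End Muddy.

(* Main.v *)
Require Import Defs.
From mathcomp Require Import all_boot.
From mathcomp Require Import zify.
Set Implicit Arguments. Unset Strict Implicit.

Definition good n (N : nat) (Ob : {set 'I_n}) r s : Prop :=
  match s with
  | U => r < #|Ob|
  | Mu => r = N - 1 /\ #|Ob| = N - 1
  | Cl => r = N /\ #|Ob| = N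
  end.

Lemma recv_good n (N : nat) (Ob Oj : {set 'I_n}) (bi bj : bool) r rj sj j r' s' st' :
  #|Ob| + bi = N -> #|Oj| + bj = N -> good N Oj rj sj -> r < #|Ob| ->
  ((s' = sj /\ r' = rj) \/ (s' = U /\ r' < rj)) ->
  (j \in Ob) = bj ->
  receive Ob r U (Msg j r' s') = Some st' ->
  exists r2 s2, st' = Run Ob r2 s2 /\ good N Ob r2 s2.
Proof.
move=> H1 H2 Hg Hr Hrel Hj; rewrite /receive Hj.
case: bi H1 => H1; case: bj H2 Hj => H2 Hj; simpl in H1, H2;
case: Hrel => [[-> ->]|[-> Hlt]] /=; case: sj Hg => /= Hg;
repeat (case: ifP => /=; rewrite ?eqE /=; move=> ?);
try discriminate; move=> [<-]; do 2 eexists; split; try reflexivity; simpl; first [assumption | lia].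

Qed.


Lemma receive_obs n (Ob : {set 'I_n}) r s m st' :
  receive Ob r s m = Some st' -> obs st' = Ob.
Proof.
case: m => j r' s'; rewrite /receive.
case: s; case: s'; repeat (case: ifP => _); try discriminate; by move=> [<-].
Qed.

Lemma ltrans_obs n (i : 'I_n) l st mu st' out :
  ltrans i l st mu = Some (st', out) -> obs st' = obs st.
Proof.
case: l; case: st => [Ob|Ob r s]; case: mu => [m|] //=; try by move=> [<-].
case E: receive => [st2|] // [<- _]; exact: receive_obs E.
Qed.

Lemma bigM_update n (sg : cstate_c n) i st' :
  obs st' = obs (sg i) -> bigM (update sg i st') = bigM sg.
Proof.
move=> H; rewrite /bigM; apply: eq_bigr => k _; rewrite /update.
by case: eqP => [->|].
Qed.

Lemma card_obs n (sg : cstate_c n) k :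
  consistent sg -> #|obs (sg k)| + (k \in bigM sg) = #|bigM sg|.
Proof.
move=> [_ H]; by rewrite H [in RHS](cardsD1 k (bigM sg)) addnC.

Qed.

Definition Inv n (sg : cstate_c n) :=
  composite_initial sg \/
  (consistent sg /\ forall k Ob r s, sg k = Run Ob r s -> good #|bigM sg| Ob r s).

Lemma inv_valid n (sg : cstate_c n) : valid_state sg -> Inv sg.
Proof.
elim=> {sg} [sg Hi|sg i l mu st' out Hv IH _ Hphi Ht]; first by left.
have Hob := ltrans_obs Ht.
have HM := bigM_update Hob.
right.
have Hcons : consistent sg.
  case: IH => [Hci|[]//].
  case: l Hphi Ht => /=.
  - by move=> Hc _.
  - by move=> _; case: (Hci i) => Ob ->; case: mu => [[]|].
  - case: mu => [[j r' s']|] //= [Oj [rj [sj [Hj _]]]].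
    case: (Hci j) => Ob; rewrite Hj => //.
have Hcons' : consistent (update sg i st').
  case: Hcons => H1 H2; split; rewrite HM //.
  move=> k; rewrite /update; case: eqP => [->|_]; by rewrite ?Hob.
split=> //.
have IHg : forall k Ob r s, sg k = Run Ob r s -> good #|bigM sg| Ob r s.
  case: IH => [Hci|[_ //]] k Ob r s Hk.
  by case: (Hci k) => Ob'; rewrite Hk.
rewrite HM => k Ob r s; rewrite /update; case: eqP => [_|_]; last exact: IHg.
move=> Hst; subst st'.
move: (card_obs i Hcons) => Hci.
case: l Hphi Ht => /=.
- case Esi: (sg i) => [Ob0|] //; case: mu => [m|] // Hc [] [<- <- <-] _ /=.
  case: ifP => /eqP E /=; last first.
    apply/card_gt0P; apply/set0Pn; apply/negP => /eqP. by [].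
  case: Hc => Hne Hc'.
  move: Hci; rewrite Esi /= E cards0 add0n => Hci.
  have : #|bigM sg| != 0 by rewrite cards_eq0.
  case: (i \in bigM sg) Hci => /= Hci; lia.
- case Esi: (sg i) => [|Ob0 r0 s0] //; case: mu => [m|] // _ [] [<- <- <-] _.
  exact: IHg Esi.
- case Esi: (sg i) => [|Ob0 r0 s0] //; case: mu => [[j r' s']|] //.
  move=> [Oj [rj [sj [Hj Hrel]]]].
  case E: receive => [st2|] // [Est _]; subst st2.
  have Hgi := IHg _ _ _ _ Esi.
  case: s0 Esi E Hgi => Esi E Hgi.
  2,3: by move: E => /= [[<- <- <-]].
  have Hgj := IHg _ _ _ _ Hj.
  move: Hci; rewrite Esi /= => Hci.
  move: (card_obs j Hcons); rewrite Hj /= => Hcj.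
  have [eji|nji] := eqVneq j i.
    subst j; rewrite Esi in Hj; case: Hj => ? ? ?; subst Oj rj sj.
    have Hni : (i \in Ob0) = false.
      by case: Hcons => _ /(_ i); rewrite Esi /= => ->; rewrite setD11.
    move: E; rewrite /receive Hni /=.
    case: Hrel => [[-> ->]|[-> Hlt]] /=; rewrite ?leqnn ?(ltnW Hlt) /=;
      by move=> [<- <- <-].
  have Hjin : (j \in Ob0) = (j \in bigM sg).
    by case: Hcons => _ /(_ i); rewrite Esi /= => ->; rewrite in_setD1 nji.
  have [r2 [s2 [Hst Hg]]] := recv_good Hci Hcj Hgj Hgi Hrel Hjin E.
  by case: Hst => -> -> ->.
Qed.

Theorem mainTheorem3 (n : nat) (hn : 0 < n) (sg : cstate_c n) :
  valid_state sg -> ~ composite_initial sg ->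
  forall (i : 'I_n) (Ob : {set 'I_n}) (r : nat) (s : status),
    sg i = Run Ob r s ->
    (s = U -> r < #|Ob| /\ #|Ob| <= #|bigM sg|) /\
    (s = Mu -> r = #|bigM sg| - 1 /\ #|Ob| = #|bigM sg| - 1) /\
    (s = Cl -> r = #|bigM sg| /\ #|Ob| = #|bigM sg|).
Proof.
move=> Hv Hni i Ob r s Hi.
case: (inv_valid Hv) => [//|[Hc Hg]].
have Hgi := Hg _ _ _ _ Hi.
have Hci := card_obs i Hc; rewrite Hi /= in Hci.
case: s Hi Hgi => Hi /= Hgi; split => // _; split => //; lia.
Qed.
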